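(* There exist constants $M_{t,j}\in[0,\infty)$ ($t\in\mathcal T$, $j=1,2,3$) and $M_J\in[0,\infty)$ ($J\in\mathcal N$), depending only on the multilinear program and not on $\hat v$, such that for every indicator vector $\hat v\in\{0,1\}^{\mathcal T}$ of a proper triple set and every optimal solution $(\lambda,\mu)$ of the linear program $\mathrm{D}(\hat v)$, we have $\lambda_{t,j}\le M_{t,j}$ for all $t\in\mathcal T$, $j=1,2,3$, and $\mu_J\le M_J$ for all $J\in\mathcal N$.
   Context: A multilinear program has data $n,m$, coefficients $\alpha_i\in\mathbb{R}$ and nonempty index sets $J_i\subseteq[n]$. Let $\mathcal N=\bigcup_i\{J:\emptyset\ne J\subseteq J_i\}$ and $\beta_J=\sum_{i:J_i=J}\alpha_i$. A triple is $t=(J,J',J'')$ with $J''\in\mathcal N$, $|J''|\ge2$, $J,J'$ nonempty, disjoint, $J\cup J'=J''$, listed with $J,J'$ in lexicographic order; $\mathsf{tail1}(t)=J$, $\mathsf{tail2}(t)=J'$, $\mathsf{head}(t)=J''$; $\mathcal T$ is the set of all triples. A proper triple set is a set $T\subseteq\mathcal T$ containing a subset $T'$ such that (1) every $J_i$ with $|J_i|>1$ is the head of some triple in $T'$, and (2) whenever a set $J$ with $|J|>1$ is the first or second element of a triple in $T'$, $J$ is the head of a different triple in $T'$; its indicator vector has $\hat v_t=1$ iff $t\in T$. $\mathrm{D}(\hat v)$: maximize $-\sum_{t\in\mathcal T}[(1-\hat v_t)(\lambda_{t,1}+\lambda_{t,2})+(2-\hat v_t)\lambda_{t,3}]-\sum_{J\in\mathcal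 N}\mu_J$ over $\lambda\ge0,\mu\ge0$ subject to, for every $J\in\mathcal N$, $\beta_J+\sum_{t:\mathsf{tail1}(t)=J}(-\lambda_{t,1}+\lambda_{t,3})+\sum_{t:\mathsf{tail2}(t)=J}(-\lambda_{t,2}+\lambda_{t,3})+\sum_{t:\mathsf{head}(t)=J}(\lambda_{t,1}+\lambda_{t,2}-\lambda_{t,3})+\mu_J\ge0$. *)

(* Defs.v *)
From HB Require Import structures.
From mathcomp Require Import all_boot all_order all_algebra.
From mathcomp Require Import reals.
Set Implicit Arguments. Unset Strict Implicit. Unset Printing Implicit Defensive.
Import Order.TTheory GRing.Theory Num.Theory.
Local Open Scope ring_scope.

(* Data of a multilinear program: [n] = 'I_n, index sets J_i (i < m),
   coefficients alpha_i.  *)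

Definition Nset (n m : nat) (Js : 'I_m -> {set 'I_n}) : {set {set 'I_n}} :=
  [set J | (J != set0) && [exists i, J \subset Js i]].

Definition node (n m : nat) (Js : 'I_m -> {set 'I_n}) :=
  {J : {set 'I_n} | J \in Nset Js}.

Definition beta (R : pzRingType) (n m : nat) (alpha : 'I_m -> R)
  (Js : 'I_m -> {set 'I_n}) (J : {set 'I_n}) : R :=
  \sum_(i < m | Js i == J) alpha i.

Fixpoint lex_lt (s t : seq nat) : bool :=
  match s, t with
  | [::], _ :: _ => true
  | x :: s', y :: t' => (x < y)%N || ((x == y) && lex_lt s' t')
  | _, _ => false
  end.

Definition set_seq (n : nat) (J : {set 'I_n}) : seq nat :=
  sort leq [seq val i | i <- enum J].

Definition set_lex_lt (n : nat) (J J' : {set 'I_n}) : bool :=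
  lex_lt (set_seq J) (set_seq J').

(* (J, J') represents the triple (J, J', J u J'). *)
Definition is_triple (n m : nat) (Js : 'I_m -> {set 'I_n})
  (p : {set 'I_n} * {set 'I_n}) : bool :=
  [&& (p.1 :|: p.2) \in Nset Js, (1 < #|p.1 :|: p.2|)%N,
      p.1 != set0, p.2 != set0, [disjoint p.1 & p.2] &
      set_lex_lt p.1 p.2].

Definition triple (n m : nat) (Js : 'I_m -> {set 'I_n}) :=
  {p : {set 'I_n} * {set 'I_n} | is_triple Js p}.

Definition tail1 n m (Js : 'I_m -> {set 'I_n}) (t : triple Js) : {set 'I_n} :=
  (val t).1.
Definition tail2 n m (Js : 'I_m -> {set 'I_n}) (t : triple Js) : {set 'I_n} :=
  (val t).2.
Definition head n m (Js : 'I_m -> {set 'I_n}) (t : triple Js) : {set 'I_n} :=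
  (val t).1 :|: (val t).2.

Definition proper_triple_set n m (Js : 'I_m -> {set 'I_n})
  (T : {set triple Js}) : Prop :=
  exists T' : {set triple Js}, T' \subset T /\
    (forall i : 'I_m, (1 < #|Js i|)%N ->
       exists2 t, t \in T' & head t = Js i) /\
    (forall t, t \in T' -> forall J : {set 'I_n},
       (J = tail1 t \/ J = tail2 t) -> (1 < #|J|)%N ->
       exists2 t', (t' \in T') && (t' != t) & head t' = J).

Definition indicator (R : pzRingType) n m (Js : 'I_m -> {set 'I_n})
  (T : {set triple Js}) : triple Js -> R :=
  fun t => (t \in T)%:R.

(* The linear program D(vhat).  lam t j, j : 'I_3, stands for
   lambda_{t,j+1}. *)
Definition D_obj (R : realType) n m (Js : 'I_m -> {set 'I_n})
  (vhat : triple Js -> R) (lam : triple Js -> 'I_3 -> R) (mu : node Js -> R) : R :=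
  - (\sum_(t : triple Js)
        ((1 - vhat t) * (lam t 0 + lam t 1) + (2 - vhat t) * lam t 2))
  - \sum_(J : node Js) mu J.

Definition D_feasible (R : realType) n m (alpha : 'I_m -> R)
  (Js : 'I_m -> {set 'I_n})
  (lam : triple Js -> 'I_3 -> R) (mu : node Js -> R) : Prop :=
  (forall t j, 0 <= lam t j) /\ (forall J, 0 <= mu J) /\
  (forall J : node Js,
     0 <= beta alpha Js (val J)
          + (\sum_(t : triple Js | tail1 t == val J) (- lam t 0 + lam t 2))
          + (\sum_(t : triple Js | tail2 t == val J) (- lam t 1 + lam t 2))
          + (\sum_(t : triple Js | head t == val J)
               (lam t 0 + lam t 1 - lam t 2))
          + mu J).

Definition D_optimal (R : realType) n m (alpha : 'I_m -> R)
  (Js : 'I_m -> {set 'I_n}) (vhat : triple Js -> R)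
  (lam : triple Js -> 'I_3 -> R) (mu : node Js -> R) : Prop :=
  D_feasible alpha lam mu /\
  forall lam' mu', D_feasible alpha lam' mu' ->
    D_obj vhat lam' mu' <= D_obj vhat lam mu.

(* Main.v *)
Require Import Defs.
From HB Require Import structures.
From mathcomp Require Import all_boot all_order all_algebra.
From mathcomp Require Import reals.
From mathcomp Require Import lra zify.
Import Order.TTheory GRing.Theory Num.Theory.
Local Open Scope ring_scope.

Section Helpers.
Variable R : realType.

Lemma sum_le_all (I : finType) (P : pred I) (f : I -> R) :
  (forall i, 0 <= f i) -> \sum_(i | P i) f i <= \sum_i f i.
Proof.
move=> h; rewrite [X in _ <= X](bigID P) /= lerDl.
by apply: sumr_ge0 => i _.
Qed.

Lemma sum_le_const (I : finType) (P : pred I) (f : I -> R) (b : R) :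
  0 <= b -> (forall i, P i -> f i <= b) ->
  \sum_(i | P i) f i <= #|I|%:R * b.
Proof.
move=> hb h; apply: (le_trans (ler_sum _ h)).
apply: (le_trans (@sum_le_all _ P (fun=> b) (fun=> hb))).
by rewrite sumr_const mulr_natl.
Qed.

Lemma single_le (I : finType) (P : pred I) (f : I -> R) i0 :
  P i0 -> (forall i, 0 <= f i) -> f i0 <= \sum_(i | P i) f i.
Proof.
move=> hp h; rewrite (bigD1 i0) //= lerDl.
by apply: sumr_ge0 => i _.
Qed.

Fixpoint Bseq (C NT : R) (k : nat) : R :=
  if k is k'.+1 then 4 * C + NT * (2 * Bseq C NT k') else 0.

Lemma Bseq_ge0 C NT k : 0 <= C -> 0 <= NT -> 0 <= Bseq C NT k.
Proof.
move=> hC hN; elim: k => [|k IH] /=; first by [].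
apply: addr_ge0; first lra.
apply: mulr_ge0 => //; lra.
Qed.

End Helpers.

Lemma tail1_N n m (Js : 'I_m -> {set 'I_n}) (t : triple Js) :
  tail1 t \in Nset Js.
Proof.
have /and5P [hN _ h1 _ _] := valP t.
move: hN; rewrite !inE => /andP [_ /existsP [i hi]].
rewrite /tail1 h1 /=; apply/existsP; exists i.
exact: subset_trans (subsetUl _ _) hi.
Qed.

Lemma tail2_N n m (Js : 'I_m -> {set 'I_n}) (t : triple Js) :
  tail2 t \in Nset Js.
Proof.
have /and5P [hN _ _ h2 _] := valP t.
move: hN; rewrite !inE => /andP [_ /existsP [i hi]].
rewrite /tail2 h2 /=; apply/existsP; exists i.
exact: subset_trans (subsetUr _ _) hi.
Qed.

Lemma tail_card n m (Js : 'I_m -> {set 'I_n}) (t : triple Js) :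
  (#|tail1 t| < #|Defs.head t|)%N /\ (#|tail2 t| < #|Defs.head t|)%N.
Proof.
have /and5P [_ _ h1 h2 /andP [hd _]] := valP t.
rewrite /Defs.head /tail1 /tail2 cardsU (disjoint_setI0 hd) cards0 subn0.
rewrite -card_gt0 in h1; rewrite -card_gt0 in h2.
split; lia.
Qed.

Arguments tail1_N {n m Js} t.
Arguments tail2_N {n m Js} t.
Arguments tail_card {n m Js} t.

Theorem proposition3 (R : realType) (n m : nat) (alpha : 'I_m -> R)
  (Js : 'I_m -> {set 'I_n}) (HJs : forall i, Js i != set0) :
  exists (Mlam : triple Js -> 'I_3 -> R) (Mmu : node Js -> R),
    (forall t j, 0 <= Mlam t j) /\ (forall J, 0 <= Mmu J) /\
    forall T : {set triple Js}, proper_triple_set T ->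
    forall (lam : triple Js -> 'I_3 -> R) (mu : node Js -> R),
      D_optimal alpha (indicator R T) lam mu ->
      (forall t j, lam t j <= Mlam t j) /\ (forall J, mu J <= Mmu J).
Proof.
set C : R := \sum_(J : node Js) `|beta alpha Js (val J)|.
set NT : R := #|{: triple Js}|%:R.
have hC : 0 <= C by apply: sumr_ge0 => J _.
have hNT : 0 <= NT by rewrite /NT ler0n.
have hB := @Bseq_ge0 R C NT n hC hNT.
exists (fun _ _ => C + Bseq R C NT n), (fun _ => C).
split; first by move=> t j; lra.
split; first by [].
move=> T _ lam mu [[hl [hm hc]] opt].
have hz : forall P : pred (triple Js), \sum_(t | P t) (0 : R) = 0.
  by move=> P; rewrite big1.
have hfe : D_feasible alpha (fun _ _ => 0) (fun J : node Js => `|beta alpha Js (val J)|).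
  split; first by [].
  split; first by move=> J; apply: normr_ge0.
  move=> J; rewrite /= oppr0 !addr0 !hz !addr0.
  have := ler_norm (- beta alpha Js (val J)); rewrite normrN; lra.
have := opt _ _ hfe.
rewrite /D_obj /= [X in - X - _ <= _](_ : _ = 0); last first.
  by apply: big1 => t _; rewrite addr0 !mulr0 addr0.
move=> hopt.
have hle : \sum_t lam t 2 <= \sum_t ((1 - indicator R T t) * (lam t 0 + lam t 1) +
      (2 - indicator R T t) * lam t 2).
  apply: ler_sum => t _; rewrite /indicator.
  have := hl t 0; have := hl t 1; have := hl t 2.
  by case: (t \in T) => /=; lra.
have hmu0 : 0 <= \sum_J mu J by apply: sumr_ge0.
have hl20 : 0 <= \sum_t lam t 2 by apply: sumr_ge0.
have hCt : \sum_t lam t 2 + \sum_J mu J <= C by rewrite /C; lra.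
have hmu : forall J, mu J <= C.
  move=> J; apply: le_trans hCt.
  have := @single_le R _ xpredT mu J isT hm; lra.
have hl2 : forall P : pred (triple Js), 0 <= \sum_(t | P t) lam t 2 <= C.
  move=> P; apply/andP; split; first by apply: sumr_ge0.
  have := @sum_le_all R _ P (fun t => lam t 2) (fun t => hl t 2); lra.
have hbeta : forall J : node Js, `|beta alpha Js (val J)| <= C.
  move=> J; exact: (@single_le R _ xpredT (fun J : node Js => `|beta alpha Js (val J)|) J isT (fun _ => normr_ge0 _)).
pose O := fun J : {set 'I_n} => \sum_(t | tail1 t == J) lam t 0 + \sum_(t | tail2 t == J) lam t 1.
have hO1 : forall t, lam t 0 <= O (tail1 t).
  move=> t; rewrite /O.
  have := @single_le R _ (fun t' => tail1 t' == tail1 t) (fun t' => lam t' 0) t (eqxx _) (fun t' => hl t' 0).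
  have : 0 <= \sum_(t' | tail2 t' == tail1 t) lam t' 1 by apply: sumr_ge0.
  lra.
have hO2 : forall t, lam t 1 <= O (tail2 t).
  move=> t; rewrite /O.
  have := @single_le R _ (fun t' => tail2 t' == tail2 t) (fun t' => lam t' 1) t (eqxx _) (fun t' => hl t' 1).
  have : 0 <= \sum_(t' | tail1 t' == tail2 t) lam t' 0 by apply: sumr_ge0.
  lra.
have key : forall k (J : node Js), (#|val J| <= k)%N -> O (val J) <= Bseq R C NT k.
  elim=> [|k IH] J hJ.
    have := valP J; rewrite inE => /andP [hne _].
    by rewrite -card_gt0 in hne; exfalso; lia.
  have hBk := @Bseq_ge0 R C NT k hC hNT.
  have hhead : \sum_(t | Defs.head t == val J) (lam t 0 + lam t 1) <= NT * (2 * Bseq R C NT k).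
    apply: sum_le_const; first lra.
    move=> t /eqP ht.
    have [c1 c2] := tail_card t; rewrite ht in c1 c2.
    have h1 := IH (exist _ (tail1 t) (tail1_N t)) ltac:(by rewrite /= -ltnS; apply: leq_trans c1 hJ).
    have h2 := IH (exist _ (tail2 t) (tail2_N t)) ltac:(by rewrite /= -ltnS; apply: leq_trans c2 hJ).
    have := hO1 t; have := hO2 t; simpl in h1, h2; lra.
  have := hc J.
  have h3 : 0 <= \sum_(t | Defs.head t == val J) lam t 2 by apply: sumr_ge0.
  have /andP [a1 a2] := hl2 (fun t => tail1 t == val J); have /andP [a3 a4] := hl2 (fun t => tail2 t == val J).
  move: a1 a2 a3 a4.
  have := hbeta J; have := ler_norm (beta alpha Js (val J)).
  have := hmu J.
  move: h3 hhead; rewrite /O !big_split /= !sumrN.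
  lra.
have hn : forall J : {set 'I_n}, (#|J| <= n)%N.
  by move=> J; apply: leq_trans (max_card _) _; rewrite card_ord.
split=> // t [[|[|[|j]]] hj] //.
- have -> : Ordinal hj = 0 by apply: val_inj.
  have := hO1 t; have := key n (exist _ (tail1 t) (tail1_N t)) (hn _); simpl; lra.
- have -> : Ordinal hj = 1 by apply: val_inj.
  have := hO2 t; have := key n (exist _ (tail2 t) (tail2_N t)) (hn _); simpl; lra.
- have -> : Ordinal hj = 2 by apply: val_inj.
  have := @single_le R _ xpredT (fun t => lam t 2) t isT (fun t => hl t 2).
  have /andP [? ?] := hl2 xpredT; simpl; lra.
Qed.
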